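(* Assume the Cartan matrix $\mathbf C$ is symmetric, and let $i\in I'$. Then we can write $\Lambda_0-\delta+\alpha_i=w(i)\Lambda_0$ for a unique $\Lambda_0$-minuscule element $w(i)\in W$.
   Context: $\mathbf C=(c_{ij})_{i,j\in I}$ is a Cartan matrix of untwisted affine type, $I=\{0,1,\dots,l\}$, $0$ the affine vertex, $I'=I\setminus\{0\}$; $(\mathfrak h,\Pi,\Pi^\vee)$ a realization with simple roots $\alpha_i$, coroots $\alpha_i^\vee$, pairing $\langle\cdot,\cdot\rangle$, $\delta$ the null root. $\Lambda_i$ ($i\in I$) are the fundamental weights, $\langle\Lambda_i,\alpha_j^\vee\rangle=\delta_{ij}$, and $P=\bigoplus\mathbb Z\Lambda_i$. $W$ is the affine Weyl group generated by $r_i$, acting by $r_i(\lambda)=\lambda-\langle\lambda,\alpha_i^\vee\rangle\alpha_i$. For $\Lambda\in P$, $w\in W$ is $\Lambda$-minuscule if it has a reduced expression $w=r_{i_l}\cdots r_{i_1}$ with $\langle r_{i_{k-1}}\cdots r_{i_1}\Lambda,\alpha_{i_k}^\vee\rangle=1$ for all $1\le k\le l$. *)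

(* Defs.v *)
From HB Require Import structures.
From mathcomp Require Import all_boot all_order all_algebra.
Set Implicit Arguments. Unset Strict Implicit. Unset Printing Implicit Defensive.
Import Order.TTheory GRing.Theory Num.Theory.
Local Open Scope ring_scope.

(* Index set I = 'I_n (n = l+1), the affine vertex is ord0 : 'I_(l.+1). *)

(** Generalized Cartan matrix (Kac, §1.1). Convention c_ij = <alpha_j, alpha_i^vee>. *)
Definition is_GCM n (C : 'M[int]_n) : Prop :=
  [/\ forall i, C i i = 2,
      forall i j, i != j -> C i j <= 0 &
      forall i j, (C i j == 0) = (C j i == 0)].

Definition indecomposable n (C : 'M[int]_n) : Prop :=
  forall J : {set 'I_n}, J != set0 -> J != setT ->
    exists j, exists k, [/\ j \in J, k \notin J & C j k != 0].

Definition ratmx m n (C : 'M[int]_(m, n)) : 'M[rat]_(m, n) :=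
  map_mx (fun z : int => z%:~R) C.

(** Affine type, Kac's definition (Aff) (Thm 4.3), for an indecomposable GCM. *)
Definition affine_type n (C : 'M[int]_n) : Prop :=
  [/\ is_GCM C, indecomposable C,
      \rank (ratmx C) = n.-1,
      (exists u : 'cV[rat]_n, (forall i, 0 < u i 0) /\ ratmx C *m u = 0) &
      (forall v : 'cV[rat]_n, (forall i, 0 <= (ratmx C *m v) i 0) ->
          ratmx C *m v = 0)].

(** The standard realization: h has basis {alpha_i^vee (i in I), d}; an
    (integral) element of h^* is recorded by its pairings with this basis:
    lambda = ((<lambda, alpha_i^vee>)_i, <lambda, d>). *)
Definition weight n : Type := ({ffun 'I_n -> int} * int)%type.

Definition pair_cor n (lam : weight n) (j : 'I_n) : int := lam.1 j.

Definition alpha l (C : 'M[int]_l.+1) (j : 'I_l.+1) : weight l.+1 :=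
  ([ffun k => C k j], (j == ord0)%:R).

Definition Lambda n (i : 'I_n) : weight n := ([ffun k => (k == i)%:R], 0).

(* null root delta = sum_j a_j alpha_j, a = Kac labels *)
Definition delta l (C : 'M[int]_l.+1) (a : 'I_l.+1 -> int) : weight l.+1 :=
  \sum_j (alpha C j) *~ a j.

Definition refl l (C : 'M[int]_l.+1) (j : 'I_l.+1) (lam : weight l.+1) :
  weight l.+1 := lam - (alpha C j) *~ pair_cor lam j.

(* the word [:: i_m; ...; i_1] acts as r_{i_m} ... r_{i_1} *)
Definition act l (C : 'M[int]_l.+1) (s : seq 'I_l.+1) (lam : weight l.+1) :
  weight l.+1 := foldr (refl C) lam s.

(* W = the group generated by the r_i acting on h^*; its elements are the maps
   act C s.  A word s is a reduced expression of w : h^* -> h^* in W. *)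
Definition reduced_expr l (C : 'M[int]_l.+1) (s : seq 'I_l.+1)
  (w : weight l.+1 -> weight l.+1) : Prop :=
  (forall lam, act C s lam = w lam) /\
  (forall t, (forall lam, act C t lam = w lam) -> size s <= size t)%N.

(* for s = [:: i_m; ...; i_1]:  <r_{i_(k-1)} ... r_{i_1} Lam, alpha_{i_k}^vee> = 1
   for all 1 <= k <= m *)
Definition minuscule_word l (C : 'M[int]_l.+1) (Lam : weight l.+1)
  (s : seq 'I_l.+1) : Prop :=
  forall k, (k < size s)%N ->
    pair_cor (act C (drop k.+1 s) Lam) (nth ord0 s k) = 1.

Definition minuscule l (C : 'M[int]_l.+1) (Lam : weight l.+1)
  (w : weight l.+1 -> weight l.+1) : Prop :=
  exists s, reduced_expr C s w /\ minuscule_word C Lam s.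

(* Main.v *)
Require Import Defs.
From HB Require Import structures.
From mathcomp Require Import all_boot all_order all_algebra.
From mathcomp Require Import zify ring lra.
Import Order.TTheory GRing.Theory Num.Theory.
Local Open Scope ring_scope.

Section Main.
Variable l : nat.
Local Notation n := l.+1.
Variable C : 'M[int]_n.
Variable a : 'I_n -> int.
Hypothesis Cdiag : forall i, C i i = 2.
Hypothesis Coff : forall i j, i != j -> C i j <= 0.
Hypothesis Cind : indecomposable C.
Hypothesis Csym : forall i j, C i j = C j i.
Hypothesis Ha_pos : forall j, 0 < a j.
Hypothesis Ha_null : forall k, \sum_j C k j * a j = 0.
Hypothesis Ha0 : a ord0 = 1.

Local Notation wt := (weight n).
Local Notation vec := {ffun 'I_n -> int}.

Lemma pc_add (u v : wt) k : pair_cor (u + v) k = pair_cor u k + pair_cor v k.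
Proof. by rewrite /pair_cor /= ffunE. Qed.
Lemma pc_opp (u : wt) k : pair_cor (- u) k = - pair_cor u k.
Proof. by rewrite /pair_cor /= ffunE. Qed.
Lemma pc_sub (u v : wt) k : pair_cor (u - v) k = pair_cor u k - pair_cor v k.
Proof. by rewrite pc_add pc_opp. Qed.
Lemma pc0 k : pair_cor (0 : wt) k = 0.
Proof. by rewrite /pair_cor /= ffunE. Qed.
Lemma pc_muln (u : wt) m k : pair_cor (u *+ m) k = pair_cor u k *+ m.
Proof.
elim: m => [|m IH]; first by rewrite !mulr0n pc0.
by rewrite !mulrS pc_add IH.
Qed.
Lemma pc_mulz (u : wt) z k : pair_cor (u *~ z) k = pair_cor u k * z.
Proof.
case: z => m; first by rewrite pc_muln -natz mulr_natr.
by rewrite NegzE !mulrNz pc_opp pc_muln -natz mulrN mulr_natr.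
Qed.
Lemma pc_sum (F : 'I_n -> wt) k : pair_cor (\sum_j F j) k = \sum_j pair_cor (F j) k.
Proof. by apply: (big_morph (fun u => pair_cor u k)); [move=> *; apply pc_add|apply pc0]. Qed.
Lemma pc_alpha j k : pair_cor (alpha C j) k = C k j.
Proof. by rewrite /pair_cor /alpha /= ffunE. Qed.
Lemma pc_Lambda0 k : pair_cor (Lambda (@ord0 l)) k = (k == ord0)%:R.
Proof. by rewrite /pair_cor /Lambda /= ffunE. Qed.
Lemma pc_refl j mu k : pair_cor (refl C j mu) k = pair_cor mu k - C k j * pair_cor mu j.
Proof. by rewrite /refl pc_sub pc_mulz pc_alpha. Qed.
Lemma pc_delta k : pair_cor (delta C a) k = 0.
Proof.
rewrite /delta pc_sum -[RHS](Ha_null k); apply: eq_bigr => j _.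
by rewrite pc_mulz pc_alpha.
Qed.

Definition Cx (x : vec) j := \sum_k C j k * x k.
Definition B (x y : vec) := \sum_j x j * Cx y j.
Definition ev j : vec := [ffun k => (k == j)%:R].
Definition pr (mu : wt) (x : vec) := \sum_k x k * pair_cor mu k.
Definition av : vec := [ffun k => a k].
Definition rr j (x : vec) : vec := x - ev j *~ Cx x j.

Lemma sum_delta (F : 'I_n -> int) j : \sum_k (k == j)%:R * F k = F j.
Proof.
rewrite (bigD1 j) //= eqxx mul1r big1 ?addr0 // => k /negPf ->; by rewrite mul0r.
Qed.

Lemma vD (x y : vec) k : (x + y) k = x k + y k. Proof. by rewrite ffunE. Qed.
Lemma vN (x : vec) k : (- x) k = - x k. Proof. by rewrite ffunE. Qed.
Lemma vB (x y : vec) k : (x - y) k = x k - y k. Proof. by rewrite vD vN. Qed.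
Lemma vZ (x : vec) z k : (x *~ z) k = x k * z.
Proof. by rewrite ffunMzE mulrzz. Qed.
Lemma vE j k : ev j k = (k == j)%:R. Proof. by rewrite ffunE. Qed.
Lemma vA k : av k = a k. Proof. by rewrite ffunE. Qed.

Lemma CxD x y j : Cx (x + y) j = Cx x j + Cx y j.
Proof. by rewrite /Cx -big_split; apply: eq_bigr => k _; rewrite vD mulrDr. Qed.
Lemma CxN x j : Cx (- x) j = - Cx x j.
Proof. by rewrite /Cx -sumrN; apply: eq_bigr => k _; rewrite vN mulrN. Qed.
Lemma CxB x y j : Cx (x - y) j = Cx x j - Cx y j.
Proof. by rewrite CxD CxN. Qed.
Lemma CxZ x z j : Cx (x *~ z) j = Cx x j * z.
Proof. by rewrite /Cx mulr_suml; apply: eq_bigr => k _; rewrite vZ mulrA. Qed.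
Lemma Cx_e j k : Cx (ev j) k = C k j.
Proof.
rewrite /Cx (eq_bigr (fun m => (m == j)%:R * C k m)) ?sum_delta // => m _.
by rewrite vE mulrC.
Qed.
Lemma Cx_a k : Cx av k = 0.
Proof. by rewrite /Cx -[RHS](Ha_null k); apply: eq_bigr => m _; rewrite vA. Qed.

Lemma BE x y : B x y = \sum_j \sum_k x j * C j k * y k.
Proof. by apply: eq_bigr => j _; rewrite /Cx mulr_sumr; apply: eq_bigr => k _; rewrite mulrA. Qed.
Lemma Bsym x y : B x y = B y x.
Proof.
rewrite !BE exchange_big /=; apply: eq_bigr => j _; apply: eq_bigr => k _.
rewrite [C j k]Csym; ring.
Qed.
Lemma BDr x y z : B x (y + z) = B x y + B x z.
Proof. by rewrite /B -big_split; apply: eq_bigr => j _; rewrite CxD mulrDr. Qed.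
Lemma BNr x y : B x (- y) = - B x y.
Proof. by rewrite /B -sumrN; apply: eq_bigr => j _; rewrite CxN mulrN. Qed.
Lemma BBr x y z : B x (y - z) = B x y - B x z.
Proof. by rewrite BDr BNr. Qed.
Lemma BZr x y z : B x (y *~ z) = B x y * z.
Proof. by rewrite /B mulr_suml; apply: eq_bigr => j _; rewrite CxZ mulrA. Qed.
Lemma BDl x y z : B (y + z) x = B y x + B z x.
Proof. by rewrite !(Bsym _ x) BDr. Qed.
Lemma BBl x y z : B (y - z) x = B y x - B z x.
Proof. by rewrite !(Bsym _ x) BBr. Qed.
Lemma BZl x y z : B (y *~ z) x = B y x * z.
Proof. by rewrite !(Bsym _ x) BZr. Qed.
Lemma B_el j y : B (ev j) y = Cx y j.
Proof. by rewrite /B (eq_bigr (fun k => (k == j)%:R * Cx y k)) ?sum_delta // => k _; rewrite vE. Qed.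
Lemma B_er j y : B y (ev j) = Cx y j.
Proof. by rewrite Bsym B_el. Qed.
Lemma B_ee j : B (ev j) (ev j) = 2.
Proof. by rewrite B_el Cx_e Cdiag. Qed.
Lemma B_ar y : B y av = 0.
Proof. by rewrite /B big1 // => j _; rewrite Cx_a mulr0. Qed.
Lemma B_al y : B av y = 0.
Proof. by rewrite Bsym B_ar. Qed.

Lemma prDl mu nu x : pr (mu + nu) x = pr mu x + pr nu x.
Proof. by rewrite /pr -big_split; apply: eq_bigr => k _; rewrite pc_add mulrDr. Qed.
Lemma prBl mu nu x : pr (mu - nu) x = pr mu x - pr nu x.
Proof. by rewrite /pr -sumrB; apply: eq_bigr => k _; rewrite pc_sub mulrBr. Qed.
Lemma prZl mu z x : pr (mu *~ z) x = pr mu x * z.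
Proof. by rewrite /pr mulr_suml; apply: eq_bigr => k _; rewrite pc_mulz mulrA. Qed.
Lemma prBr mu x y : pr mu (x - y) = pr mu x - pr mu y.
Proof. by rewrite /pr -sumrB; apply: eq_bigr => k _; rewrite vB mulrBl. Qed.
Lemma prZr mu x z : pr mu (x *~ z) = pr mu x * z.
Proof. by rewrite /pr mulr_suml; apply: eq_bigr => k _; rewrite vZ mulrAC. Qed.
Lemma pr_e mu j : pr mu (ev j) = pair_cor mu j.
Proof. by rewrite /pr (eq_bigr (fun k => (k == j)%:R * pair_cor mu k)) ?sum_delta // => k _; rewrite vE. Qed.
Lemma pr_alpha j x : pr (alpha C j) x = Cx x j.
Proof. by rewrite /pr /Cx; apply: eq_bigr => k _; rewrite pc_alpha Csym mulrC. Qed.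
Lemma pr_L0 x : pr (Lambda (@ord0 l)) x = x ord0.
Proof.
rewrite /pr (eq_bigr (fun k => (k == ord0)%:R * x k)) ?sum_delta // => k _.
by rewrite pc_Lambda0 mulrC.
Qed.

Lemma pr_refl j mu x : pr (refl C j mu) (rr j x) = pr mu x.
Proof.
rewrite /refl /rr prBl prZl !prBr !prZr pr_e pr_alpha pr_alpha Cx_e Cdiag. ring.
Qed.

Lemma q_rr j x : B (rr j x) (rr j x) = B x x.
Proof.
rewrite /rr BBl BZl !BBr !BZr B_el B_er B_ee. ring.
Qed.

Lemma rrK j x : rr j (rr j x) = x.
Proof.
apply/ffunP => k; rewrite /rr !vB !vZ vE CxB CxZ Cx_e Cdiag. ring.
Qed.

Local Notation ri z := (z%:~R : rat).
Definition yy (x : vec) k : rat := ri (x k) / ri (a k).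
Lemma ra_neq0 k : ri (a k) != 0.
Proof. by rewrite intr_eq0 gt_eqF ?Ha_pos. Qed.
Lemma yyE (x : vec) k : ri (x k) = ri (a k) * yy x k.
Proof. by rewrite /yy mulrC divfK ?ra_neq0. Qed.

Definition term (x : vec) j k : rat :=
  - (ri (C j k) * ri (a j) * ri (a k) * (yy x j - yy x k) ^+ 2).

Lemma q_rat x : ri (B x x) *+ 2 = \sum_j \sum_k term x j k.
Proof.
have E : forall j k, term x j k =
   (ri (x j) * ri (C j k) * ri (x k)) *+ 2
   - (ri (a j) * yy x j ^+ 2) * (ri (C j k) * ri (a k))
   - (ri (a k) * yy x k ^+ 2) * (ri (C k j) * ri (a j)).
  move=> j k; rewrite /term !yyE [C k j]Csym; ring.
rewrite (eq_bigr (fun j => \sum_k (ri (x j) * ri (C j k) * ri (x k)) *+ 2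
   - \sum_k (ri (a j) * yy x j ^+ 2) * (ri (C j k) * ri (a k))
   - \sum_k (ri (a k) * yy x k ^+ 2) * (ri (C k j) * ri (a j)))); last first.
  by move=> j _; rewrite -!sumrB; apply: eq_bigr => k _; exact: E.
rewrite !sumrB.
have -> : \sum_j \sum_k (ri (a j) * yy x j ^+ 2) * (ri (C j k) * ri (a k)) = 0.
  rewrite big1 // => j _; rewrite -mulr_sumr.
  rewrite (eq_bigr (fun k => ri (C j k * a k))); last by move=> k _; rewrite intrM.
  by rewrite -rmorph_sum Ha_null mulr0.
have -> : \sum_j \sum_k (ri (a k) * yy x k ^+ 2) * (ri (C k j) * ri (a j)) = 0.
  rewrite exchange_big big1 // => k _; rewrite -mulr_sumr.
  rewrite (eq_bigr (fun j => ri (C k j * a j))); last by move=> j _; rewrite intrM.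
  by rewrite -rmorph_sum Ha_null mulr0.
rewrite !subr0 BE rmorph_sum -sumrMnl.
apply: eq_bigr => j _; rewrite rmorph_sum -sumrMnl; apply: eq_bigr => k _.
by rewrite /= !intrM.
Qed.

Lemma term_ge0 x j k : 0 <= term x j k.
Proof.
rewrite /term oppr_ge0.
have [->|njk] := eqVneq j k; first by rewrite subrr expr0n /= mulr0.
apply: mulr_le0_ge0; last by rewrite sqr_ge0.
apply: mulr_le0_ge0; last by rewrite ler0z ltW.
apply: mulr_le0_ge0; last by rewrite ler0z ltW.
by rewrite lerz0 Coff.
Qed.

Lemma q_ge0 x : 0 <= B x x.
Proof.
rewrite -(ler0z rat) -(pmulrn_lge0 _ (isT : (0 < 2)%N)) q_rat.
by apply: sumr_ge0 => j _; apply: sumr_ge0 => k _; apply: term_ge0.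
Qed.

Lemma q_eq0 x : B x x = 0 -> forall k, x k = x ord0 * a k.
Proof.
move=> H0.
have Ht : forall j k, term x j k = 0.
  move=> j k.
  have S : \sum_j \sum_k term x j k = 0 by rewrite -q_rat H0 mul0rn.
  have S1 := psumr_eq0P (fun j _ => sumr_ge0 _ (fun k _ => term_ge0 x j k)) S.
  exact: (psumr_eq0P (fun k _ => term_ge0 x j k) (S1 j isT)).
have Hy : forall j k, C j k != 0 -> yy x j = yy x k.
  move=> j k Cjk; move: (Ht j k); rewrite /term => /eqP; rewrite oppr_eq0.
  rewrite !mulf_eq0 !intr_eq0 (negPf Cjk) !(gt_eqF (Ha_pos _)) /=.
  by rewrite orbb subr_eq0 => /eqP.
pose J := [set k | yy x k == yy x ord0].
have JT : J = setT.
  apply/eqP; apply/negPn/negP => JnT.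
  have J0 : J != set0 by apply/set0Pn; exists ord0; rewrite inE.
  have [j [k [jJ kJ Cjk]]] := Cind J J0 JnT.
  move: jJ kJ; rewrite !inE => /eqP <-; rewrite (Hy _ _ Cjk) eqxx.
  done.
move=> k; have : k \in J by rewrite JT inE.
rewrite inE => /eqP Hk.
apply: (@intr_inj rat); rewrite intrM yyE Hk /yy Ha0 divr1 mulrC.
done.
Qed.

Definition gg (x : vec) (j k : 'I_n) : int := if (k < j)%N then x j * C j k * x k else 0.
Lemma q_even x : B x x = 2 * (\sum_j x j ^+ 2 + \sum_j \sum_k gg x j k).
Proof.
have E : forall j k, x j * C j k * x k =
   gg x j k + (k == j)%:R * (x j * C j k * x k) + gg x k j.
  move=> j k; rewrite /gg.
  case: (ltngtP j k) => [jk|jk|jk].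
  - have h1 : (k < j)%N = false by apply/negbTE; rewrite -leqNgt ltnW.
    have h2 : (k == j) = false by apply/negbTE; rewrite neq_ltn jk orbT.
    rewrite h2 mul0r add0r [C j k]Csym; ring.
  - have h1 : (j < k)%N = false by apply/negbTE; rewrite -leqNgt ltnW.
    have h2 : (k == j) = false by apply/negbTE; rewrite neq_ltn jk.
    by rewrite h2 mul0r !addr0.
  - have -> : k = j by apply: val_inj.
    by rewrite eqxx mul1r add0r addr0.
rewrite BE (eq_bigr (fun j => \sum_k (gg x j k + (k == j)%:R * (x j * C j k * x k) + gg x k j)));
  last by move=> j _; apply: eq_bigr => k _; exact: E.
under eq_bigr do rewrite !big_split /= sum_delta.
rewrite !big_split /= [X in _ + _ + X]exchange_big /=.
rewrite [X in _ + X + _](eq_bigr (fun j => x j ^+ 2 * 2)); last by move=> j _; rewrite Cdiag; ring.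
rewrite -mulr_suml; ring.
Qed.

Lemma q_ge2 (y : vec) : (forall k, 0 <= y k) -> (exists k, y k != 0) ->
  (exists k, y k == 0) -> 2 <= B y y.
Proof.
move=> y0 [k1 k1nz] [k2 /eqP k2z].
have [Z HZ] : exists z, B y y = 2 * z by eexists; exact: q_even.
have Hge := q_ge0 y.
have Hne : B y y != 0.
  apply/eqP => /q_eq0 Hy.
  have h0 : y ord0 != 0 by apply: contraNneq k1nz => e; rewrite Hy e mul0r.
  move: (Hy k2); rewrite k2z => /esym/eqP; rewrite mulf_eq0 (negPf h0) /=.
  by rewrite gt_eqF ?Ha_pos.
move: Hge Hne; rewrite HZ => Hge /eqP Hne; lia.
Qed.

Lemma dichot x : B x x = 2 -> (forall k, 0 <= x k) \/ (forall k, x k <= 0).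
Proof.
move=> H2.
case: (boolP [forall k, 0 <= x k]) => [/forallP Hp|]; first by left.
case: (boolP [forall k, x k <= 0]) => [/forallP Hm|]; first by right.
rewrite !negb_forall => /existsP [k1 Hk1] /existsP [k2 Hk2].
rewrite -ltNge in Hk1; rewrite -ltNge in Hk2.
pose p : vec := [ffun k => Num.max (x k) 0].
pose m : vec := [ffun k => Num.max (- x k) 0].
have xE : x = p - m.
  apply/ffunP => k; rewrite vB !ffunE.
  case: (boolP (0 <= x k)) => h.
  - rewrite (max_l h) max_r ?subr0 //; by rewrite oppr_le0.
  - rewrite -ltNge in h.
    rewrite max_r ?max_l; [by rewrite opprK add0r| |exact: ltW].
    by rewrite oppr_ge0 ltW.
have p0 : forall k, 0 <= p k by move=> k; rewrite ffunE le_max lexx orbT.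
have m0 : forall k, 0 <= m k by move=> k; rewrite ffunE le_max lexx orbT.
have pm : forall k, p k * m k = 0.
  move=> k; rewrite !ffunE; case: (boolP (0 <= x k)) => h.
  - by rewrite (max_r (_ : - x k <= 0)) ?mulr0 // oppr_le0.
  - rewrite -ltNge in h. by rewrite (max_r (ltW h)) mul0r.
have Bpm : B p m <= 0.
  rewrite BE; apply: sumr_le0 => j _; apply: sumr_le0 => k _.
  have [->|jk] := eqVneq j k; first by rewrite mulrAC pm mul0r.
  rewrite -mulrA; apply: mulr_ge0_le0 => //; apply: mulr_le0_ge0 => //; exact: Coff.
have Hpp : 2 <= B p p.
  apply: q_ge2 => //.
    by exists k1; rewrite ffunE gt_eqF // lt_max Hk1.
  exists k2; rewrite ffunE; apply/eqP; apply: max_r; exact: ltW.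
have Hmm : 2 <= B m m.
  apply: q_ge2 => //.
    by exists k2; rewrite ffunE gt_eqF // lt_max oppr_gt0 Hk2.
  exists k1; rewrite ffunE; apply/eqP; apply: max_r; rewrite oppr_le0; exact: ltW.
move: H2; rewrite xE BBl !BBr (Bsym m p) => H2.
lia.
Qed.

Definition posroot (b : vec) := B b b = 2 /\ forall k, 0 <= b k.
Local Notation L0 := (Lambda (@ord0 l)).

Lemma e_root j : posroot (ev j).
Proof. by split; [exact: B_ee | move=> k; rewrite vE ler0n]. Qed.

Lemma q_single (x : vec) j : (forall k, k != j -> x k = 0) -> B x x = 2 * x j ^+ 2.
Proof.
move=> H; rewrite /B (bigD1 j) //= big1 ?addr0; last by move=> k /H ->; rewrite mul0r.
rewrite /Cx (bigD1 j) //= big1 ?addr0; last by move=> k /H ->; rewrite mulr0.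
by rewrite Cdiag; ring.
Qed.

Lemma rr_ne j (x : vec) k : k != j -> rr j x k = x k.
Proof. by move=> kj; rewrite /rr vB vZ vE (negPf kj) mul0r subr0. Qed.

Lemma rr_pos j b : posroot b -> b != ev j -> posroot (rr j b).
Proof.
move=> [Hb2 Hb0] bne; have Hq : B (rr j b) (rr j b) = 2 by rewrite q_rr.
case: (dichot _ Hq) => Hs; first by split.
exfalso; move/negP: bne; apply; apply/eqP.
have Z : forall k, k != j -> b k = 0.
  by move=> k kj; apply/eqP; rewrite eq_le Hb0 andbT -(rr_ne j b k kj) Hs.
have := @q_single b j Z; rewrite Hb2 => H1.
have bj1 : b j = 1 by have := Hb0 j; nia.
apply/ffunP => k; rewrite vE; have [->|kj] := eqVneq k j; first by rewrite bj1.
by rewrite Z.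
Qed.

Lemma rr_e_neq j b : posroot b -> rr j b != ev j.
Proof.
move=> [_ Hb0]; apply/negP => /eqP E.
have : b = rr j (ev j) by rewrite -E rrK.
move=> E2; have := Hb0 j; rewrite E2 /rr vB vZ vE eqxx Cx_e Cdiag.
by [].
Qed.

Lemma ub t L : uniq L ->
  (forall b, b \in L -> posroot b /\ pr (act C t L0) b < 0) -> (size L <= size t)%N.
Proof.
elim: t L => [|j t IH] L.
  case: L => // b L' _ H; have [[_ hb] hlt] := H b (mem_head _ _).
  by move: hlt; rewrite /= pr_L0 ltNge hb.
move=> uL H.
pose L' := map (rr j) (filter (predC1 (ev j)) L).
have uL' : uniq L'.
  by rewrite map_inj_uniq ?filter_uniq //; apply: (can_inj (rrK j)).
have HL' : forall b, b \in L' -> posroot b /\ pr (act C t L0) b < 0.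
  move=> b' /mapP [b]; rewrite mem_filter => /andP [bne bL] ->.
  have [Hb Hlt] := H b bL; split; first exact: rr_pos.
  by rewrite -(pr_refl j) rrK.
have := IH L' uL' HL'; rewrite size_map size_filter /=.
have Hc : (count (pred1 (ev j)) L <= 1)%N.
  by rewrite (count_uniq_mem _ uL); case: (_ \in _).
have := count_predC (predC1 (ev j)) L.
rewrite [count (predC _) _](eq_count (a2 := pred1 (ev j))); last by move=> x /=; rewrite negbK.
move: Hc; set u := count_mem _ L; set v := count _ L; set w := size L; set z := size t; lia.
Qed.

Fixpoint mw (nu : wt) (s : seq 'I_n) : Prop :=
  match s with [::] => True | x :: s' => mw nu s' /\ pair_cor (act C s' nu) x = 1 end.

Lemma mw_list s : mw L0 s -> exists L, [/\ uniq L, size L = size s &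
   forall b, b \in L -> posroot b /\ pr (act C s L0) b < 0].
Proof.
elim: s => [|x s IH] /=; first by move=> _; exists [::].
move=> [/IH [L [uL sL HL]] H1].
exists (ev x :: map (rr x) L); split.
- rewrite /= map_inj_uniq ?uL ?andbT; last exact: (can_inj (rrK x)).
  apply/mapP => [[b bL E]]; have [Hb _] := HL b bL.
  by move: (@rr_e_neq x b Hb); rewrite -E eqxx.
- by rewrite /= size_map sL.
- move=> b; rewrite inE => /orP [/eqP ->|/mapP [b' b'L ->]].
    split; first exact: e_root.
    by rewrite pr_e pc_refl H1 Cdiag.
  have [Hb Hlt] := HL b' b'L; split; last by rewrite pr_refl.
  apply: rr_pos => //; apply/eqP => E; move: Hlt; rewrite E pr_e H1.
  by [].
Qed.

Lemma mw_reduced s : mw L0 s -> reduced_expr C s (act C s).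
Proof.
move=> Hs; split => // t Ht.
have [L [uL sL HL]] := mw_list _ Hs.
rewrite -sL; apply: ub => // b bL; rewrite Ht; exact: HL.
Qed.

Lemma act_cat s1 s2 nu : act C (s1 ++ s2) nu = act C s1 (act C s2 nu).
Proof. by rewrite /act foldr_cat. Qed.

Lemma mw_cat nu s1 s2 : mw nu (s1 ++ s2) <-> mw nu s2 /\ mw (act C s2 nu) s1.
Proof.
elim: s1 => [|x s1 IH] /=; first by split => // [[]].
rewrite IH act_cat; tauto.
Qed.

Lemma refl_invol j mu : refl C j (refl C j mu) = mu.
Proof.
rewrite {1}/refl pc_refl Cdiag /refl -addrA -opprD -mulrzDr.
have -> : pair_cor mu j + (pair_cor mu j - 2 * pair_cor mu j) = 0 by ring.
by rewrite mulr0z subr0.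
Qed.

Lemma refl_comm j x mu : C j x = 0 -> C x j = 0 ->
  refl C j (refl C x mu) = refl C x (refl C j mu).
Proof.
move=> h1 h2; rewrite {1}/refl pc_refl h1 mul0r subr0.
rewrite [in RHS]/refl pc_refl h2 mul0r subr0 /refl.
by rewrite -!addrA [X in _ + X = _]addrC.
Qed.

Lemma act_comm t j mu : (forall x, x \in t -> C j x = 0) ->
  act C t (refl C j mu) = refl C j (act C t mu).
Proof.
elim: t => [|x t IH] H //=.
rewrite IH; last by move=> y yt; apply: H; rewrite inE yt orbT.
rewrite refl_comm //; first by rewrite Csym; apply: H; rewrite inE eqxx.
by apply: H; rewrite inE eqxx.
Qed.

Lemma pc_act_ge t j nu : j \notin t -> mw nu t ->
  pair_cor nu j <= pair_cor (act C t nu) j /\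
  (pair_cor (act C t nu) j = pair_cor nu j -> forall x, x \in t -> C j x = 0).
Proof.
elim: t => [|x t IH] /=; first by move=> _ _; split.
rewrite inE negb_or => /andP [jx jt] [Hmw H1].
have [Hge Heq] := IH jt Hmw.
rewrite pc_refl H1 mulr1.
have Cjx : C j x <= 0 by apply: Coff.
have L1 : forall u v c : int, u <= v -> c <= 0 -> u <= v - c by move=> u v c; lia.
have L2 : forall u v c : int, u <= v -> c <= 0 -> v - c = u -> c = 0 /\ v = u by move=> u v c; lia.
split; first exact: L1.
move=> E; have [E1 E2] := L2 _ _ _ Hge Cjx E.
move=> y; rewrite inE => /orP [/eqP ->|yt] //.
exact: Heq.
Qed.

Lemma mw_refl_comm t j nu : (forall x, x \in t -> C j x = 0) ->
  mw (refl C j nu) t <-> mw nu t.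
Proof.
elim: t => [|x t IH] H //=.
have H' : forall y, y \in t -> C j y = 0 by move=> y yt; apply: H; rewrite inE yt orbT.
rewrite IH // act_comm // pc_refl.
have -> : C x j = 0 by rewrite Csym; apply: H; rewrite inE eqxx.
by rewrite mul0r subr0.
Qed.

Lemma split_first (j : 'I_n) t : j \in t -> exists t1 t2, t = t1 ++ j :: t2 /\ j \notin t1.
Proof.
elim: t => [|x t IH] //; rewrite inE => /orP [/eqP ->|jt].
  by exists [::], t.
have [/eqP ->|jx] := boolP (j == x); first by exists [::], t.
have [t1 [t2 [-> nt1]]] := IH jt.
by exists (x :: t1), t2; rewrite inE negb_or jx nt1.
Qed.

Lemma mw_uniq s t : mw L0 s -> mw L0 t -> act C s L0 = act C t L0 ->
  forall lam, act C s lam = act C t lam.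
Proof.
elim: s t => [|j s IH] t Hs Ht Est.
  have [L [uL sL HL]] := mw_list _ Ht.
  have : (size L <= size ([::] : seq 'I_n))%N.
    by apply: ub => // b bL; rewrite Est; exact: HL.
  by rewrite sL; case: t {Ht Est sL HL} => //.
move: Hs => /= [Hs H1].
have Hm1 : pair_cor (act C t L0) j = -1 by rewrite -Est /= pc_refl H1 Cdiag.
have jt : j \in t.
  apply/negPn/negP => jnt.
  have [Hge _] := pc_act_ge _ _ _ jnt Ht.
  by move: Hge; rewrite Hm1 pc_Lambda0; case: (_ == _).
have [t1 [t2 [tE nt1]]] := split_first _ _ jt.
move: Ht; rewrite tE => /mw_cat [/= [Ht2 Hj] Ht1].
have [Hge Heq] := pc_act_ge _ _ _ nt1 Ht1.
have Ecomm : forall x, x \in t1 -> C j x = 0.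
  apply: Heq; move: Hm1; rewrite tE act_cat /= => ->.
  by rewrite pc_refl Hj Cdiag.
have Ht' : mw L0 (t1 ++ t2).
  by apply/mw_cat; split => //; move: Ht1; rewrite mw_refl_comm.
have Est' : act C s L0 = act C (t1 ++ t2) L0.
  apply: (can_inj (refl_invol j)).
  rewrite -[refl C j (act C s L0)]/(act C (j :: s) L0) Est tE !act_cat /=.
  by rewrite act_comm.
move=> lam; rewrite /= (IH _ Hs Ht' Est') !act_cat /= act_comm //.
Qed.

Lemma eqxxI (i : 'I_n) : (i == i) = true. Proof. exact: eqxx. Qed.
Lemma tR : true%:R = 1 :> int. Proof. by []. Qed.
Lemma fR : false%:R = 0 :> int. Proof. by []. Qed.

Definition W (b : vec) : wt := L0 - delta C a + \sum_j alpha C j *~ b j.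
Definition theta : vec := av - ev ord0.

Lemma pc_W b k : pair_cor (W b) k = (k == ord0)%:R + Cx b k.
Proof.
rewrite /W pc_add pc_sub pc_delta pc_Lambda0 subr0 pc_sum; congr (_ + _).
by apply: eq_bigr => j _; rewrite pc_mulz pc_alpha.
Qed.

Lemma sum_alpha_delta j : \sum_k alpha C k *~ (k == j)%:R = alpha C j.
Proof.
rewrite (bigD1 j) //= eqxx mulr1z big1 ?addr0 // => k /negPf ->.
by rewrite mulr0z.
Qed.

Lemma W_add b j : W (b + ev j) = W b + alpha C j.
Proof.
rewrite /W -!addrA; congr (_ + (_ + _)).
rewrite -(sum_alpha_delta j) -big_split /=; apply: eq_bigr => k _.
by rewrite vD vE mulrzDr.
Qed.

Lemma W_e j : W (ev j) = L0 - delta C a + alpha C j.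
Proof.
rewrite /W -(sum_alpha_delta j); congr (_ + _); apply: eq_bigr => k _; by rewrite vE.
Qed.

Lemma W_theta : W theta = refl C ord0 L0.
Proof.
rewrite /refl pc_Lambda0 eqxx mulr1z /W /theta.
rewrite (eq_bigr (fun k => alpha C k *~ a k - alpha C k *~ (k == ord0)%:R)); last first.
  by move=> k _; rewrite vB vA vE mulrzBr.
rewrite sumrB sum_alpha_delta /delta.
by rewrite addrA subrK.
Qed.

Lemma q_add_e x j : B (x + ev j) (x + ev j) = B x x + 2 * Cx x j + 2.
Proof. rewrite BDl !BDr B_el B_er B_ee; ring. Qed.

Lemma le_a b : B b b = 2 -> b ord0 = 0 -> forall k, b k <= a k.
Proof.
move=> H2 H0.
have Hq : B (av - b) (av - b) = 2 by rewrite BBl !BBr B_al B_ar B_al H2; ring.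
case: (dichot _ Hq) => H k.
  by move: (H k); rewrite vB vA subr_ge0.
by move: (H ord0); rewrite vB vA H0 Ha0.
Qed.

Lemma Cx_ge b j : B b b = 2 -> (forall k, 0 <= b k) -> b ord0 = 0 -> b != theta ->
  -1 <= Cx b j.
Proof.
move=> H2 H0 Hb0 Hne.
have Hq := q_ge0 (b + ev j); rewrite q_add_e H2 in Hq.
have [Hlt|Heq] : -1 <= Cx b j \/ Cx b j = -2 by lia.
  by [].
exfalso.
have Hz : B (b + ev j) (b + ev j) = 0 by rewrite q_add_e H2 Heq.
have E := q_eq0 _ Hz.
move: E; rewrite vD vE Hb0 add0r => E.
have [j0|jn0] := eqVneq j ord0.
  subst j; rewrite eqxx in E.
  move/negP: Hne; apply; apply/eqP/ffunP => k.
  have e1 : true%:R = 1 :> int by [].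
  move: (E k); rewrite vD vE e1 mul1r /theta vB vA vE => <-; ring.
have h0 : (ord0 == j) = false by rewrite eq_sym (negPf jn0).
move: (E j); rewrite vD vE eqxx h0 mul0r => h.
have := H0 j; move: h; generalize (b j); move=> z; lia.
Qed.

Lemma step b : B b b = 2 -> (forall k, 0 <= b k) -> b ord0 = 0 -> b != theta ->
  exists j, j != ord0 /\ Cx b j = -1.
Proof.
move=> H2 H0 Hb0 Hne.
pose g : vec := theta - b.
have g0 : forall k, 0 <= g k.
  move=> k; rewrite /g /theta !vB vA vE.
  have [->|kn] := eqVneq k ord0; first by rewrite Ha0 Hb0 tR subrr.
  by rewrite fR subr0 subr_ge0 le_a.
have gz : g ord0 = 0. rewrite /g /theta !vB vA vE (eqxx (@ord0 l)) tR Ha0 Hb0; ring.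
have HB : B g b <= -1.
  rewrite /g /theta !BBl B_al B_el H2.
  have := Cx_ge _ ord0 H2 H0 Hb0 Hne; lia.
have [k Hk] : exists k, g k * Cx b k < 0.
  case: (boolP [exists k, g k * Cx b k < 0]) => [/existsP //|].
  rewrite negb_exists => /forallP Hall; exfalso.
  have : 0 <= B g b.
    by apply: sumr_ge0 => k _; rewrite leNgt; apply: Hall.
  lia.
have gk : 0 < g k.
  rewrite lt_neqAle g0 andbT; apply/negP => /eqP E; move: Hk; rewrite -E mul0r.
  by rewrite ltxx.
have ck : Cx b k < 0.
  by move: Hk; rewrite pmulr_rlt0.
exists k; split.
  by apply/eqP => E; move: gk; rewrite E gz ltxx.
have := Cx_ge _ k H2 H0 Hb0 Hne; lia.
Qed.

Lemma exist_path N (b : vec) : \sum_k (a k - b k) <= N%:Z -> B b b = 2 ->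
  (forall k, 0 <= b k) -> b ord0 = 0 ->
  exists u, mw (W theta) u /\ act C u (W theta) = W b.
Proof.
elim: N b => [|N IH] b HN H2 H0 Hb0.
  exfalso.
  have : 0 < \sum_k (a k - b k).
    rewrite (bigD1 ord0) //= Ha0 Hb0 subr0.
    have : 0 <= \sum_(k | k != ord0) (a k - b k).
      by apply: sumr_ge0 => k _; rewrite subr_ge0 le_a.
    move: (\sum_(k | k != ord0) (a k - b k)) => S; lia.
  lia.
have [E|Hne] := eqVneq b theta.
  by exists [::]; rewrite E.
have [j [jn0 Hj]] := step _ H2 H0 Hb0 Hne.
pose b' := b + ev j.
have H2' : B b' b' = 2 by rewrite /b' q_add_e H2 Hj.
have H0' : forall k, 0 <= b' k by move=> k; rewrite /b' vD vE addr_ge0.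
have Hb0' : b' ord0 = 0 by rewrite /b' vD vE Hb0 add0r eq_sym (negPf jn0).
have HN' : \sum_k (a k - b' k) <= N%:Z.
  have -> : \sum_k (a k - b' k) = \sum_k (a k - b k) - 1.
    rewrite /b' (eq_bigr (fun k => (a k - b k) - (k == j)%:R)); last first.
      by move=> k _; rewrite vD vE; ring.
    rewrite sumrB [X in _ - X](eq_bigr (fun k => (k == j)%:R * 1)); last by move=> k _; rewrite mulr1.
    by rewrite sum_delta.
  move: HN; rewrite -[N.+1]addn1 PoszD; lia.
have [u [Hu Eu]] := IH b' HN' H2' H0' Hb0'.
exists (j :: u); split => /=.
  split => //; rewrite Eu pc_W (negPf jn0) add0r /b' CxD Cx_e Cdiag Hj; ring.
rewrite Eu /refl pc_W (negPf jn0) add0r /b' CxD Cx_e Cdiag Hj.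
rewrite W_add; have -> : -1 + 2 = 1 :> int by [].
by rewrite mulr1z addrK.
Qed.

Lemma mwP Lam s : minuscule_word C Lam s <-> mw Lam s.
Proof.
elim: s => [|x s IH] /=; first by split => // _ k.
rewrite -IH; split.
  move=> H; split; last by have := H 0%N isT; rewrite /= drop0.
  by move=> k ks; exact: (H k.+1 ks).
move=> [H1 H2] [|k] ks //=.
  by rewrite drop0.
exact: H1.
Qed.

Lemma main_sec (i : 'I_n) (Hi : i != ord0) :
  exists w : seq 'I_n,
    [/\ minuscule C L0 (act C w),
        act C w L0 = L0 - delta C a + alpha C i &
        forall w' : seq 'I_n,
          minuscule C L0 (act C w') ->
          act C w' L0 = L0 - delta C a + alpha C i ->
          forall lam, act C w' lam = act C w lam].
Proof.
have Hb : B (ev i) (ev i) = 2 by exact: B_ee.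
have Hb0 : forall k, 0 <= ev i k by move=> k; rewrite vE ler0n.
have Hi0 : ev i ord0 = 0 by rewrite vE eq_sym (negPf Hi).
have HN : \sum_k (a k - ev i k) <= (absz (\sum_k (a k - ev i k)))%:Z.
  by rewrite abszE ler_norm.
have [u [Hu Eu]] := exist_path _ _ HN Hb Hb0 Hi0.
have Hw : mw L0 (u ++ [:: ord0]).
  apply/mw_cat; split; first by rewrite /= pc_Lambda0 eqxx.
  by rewrite /= -W_theta.
have Ew : act C (u ++ [:: ord0]) L0 = L0 - delta C a + alpha C i.
  by rewrite act_cat /= -W_theta Eu W_e.
exists (u ++ [:: ord0]); split => //.
  by exists (u ++ [:: ord0]); split; [exact: mw_reduced | apply/mwP].
move=> w' [s' [[Hs'1 _] /mwP Hs'2]] Ew' lam.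
rewrite -Hs'1; apply: mw_uniq => //.
by rewrite Hs'1 Ew' Ew.
Qed.

End Main.

Theorem lemma5p22 (l : nat) (C : 'M[int]_l.+1) (a : 'I_l.+1 -> int)
  (HC : affine_type C) (Hsym : C^T = C)
  (Ha_pos : forall j, 0 < a j)
  (Ha_null : forall k, \sum_j C k j * a j = 0)
  (Ha0 : a ord0 = 1)
  (i : 'I_l.+1) (Hi : i != ord0) :
  exists w : seq 'I_l.+1,
    [/\ minuscule C (Lambda ord0) (act C w),
        act C w (Lambda ord0) = Lambda ord0 - delta C a + alpha C i &
        forall w' : seq 'I_l.+1,
          minuscule C (Lambda ord0) (act C w') ->
          act C w' (Lambda ord0) = Lambda ord0 - delta C a + alpha C i ->
          forall lam, act C w' lam = act C w lam].
Proof.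
case: HC => [[Cd Co _] Ci _ _ _].
have Cs : forall p q, C p q = C q p by move=> p q; rewrite -{1}Hsym mxE.
by apply: main_sec.
Qed.
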